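(* Let $a$ and $b$ be coprime positive integers and let $\ell\in G_{(a,b)}$ with $\ell\notin\{1,2\}$. Then $\mathrm{ord}_\ell(ab^{-1})$ is even, $\min\mathcal{K}_{(a,b)}(\ell)=\mathrm{ord}_\ell(ab^{-1})/2$, and $$\mathcal{K}_{(a,b)}(\ell)=\Bigl\{\alpha\cdot\tfrac{\mathrm{ord}_\ell(ab^{-1})}{2}:\ \alpha \text{ an odd positive integer}\Bigr\},$$ which is an infinite set.
   Context: For nonzero integers $x,y$, $G_{(x,y)}$ is the set of positive integers $n$ such that $n\mid(x^k+y^k)$ for some positive integer $k$; for such $n$, $\mathcal{K}_{(x,y)}(n)=\{k\text{ positive integer}: n\mid(x^k+y^k)\}$. For $\ell$ coprime to $ab$ (which holds when $\ell\in G_{(a,b)}$ and $\gcd(a,b)=1$), $\mathrm{ord}_\ell(ab^{-1})$ is the multiplicative order modulo $\ell$ of $ab^{-1}$, with $b^{-1}$ the inverse of $b$ modulo $\ell$. *)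

(* Defs.v *)
From mathcomp Require Import all_boot.
Set Implicit Arguments. Unset Strict Implicit. Unset Printing Implicit Defensive.

Definition inG (x y n : nat) : Prop :=
  0 < n /\ exists k, 0 < k /\ n %| x ^ k + y ^ k.

Definition inK (x y n k : nat) : Prop := 0 < k /\ n %| x ^ k + y ^ k.

(* inverse of b modulo l: the least c < l with b * c = 1 mod l (exists when coprime b l) *)
Definition invmod (l b : nat) : nat :=
  let s := iota 0 l in nth 0 s (find (fun c => b * c == 1 %[mod l]) s).

(* multiplicative order of x modulo l: least m in 1..l with x^m = 1 mod l
   (exists, and is <= l, when coprime x l and l >= 1) *)
Definition ordmod (l x : nat) : nat :=
  let s := iota 1 l in nth 0 s (find (fun m => x ^ m == 1 %[mod l]) s).

Definition ord_ab (l a b : nat) : nat := ordmod l (a * invmod l b).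

(* Main.v *)
Require Import Defs.
From mathcomp Require Import all_boot.
From mathcomp Require Import zify.
From mathcomp Require Import cyclic.

Lemma totient_le n : totient n <= n.
Proof.
rewrite totient_count_coprime.
apply: (@leq_trans (\sum_(0 <= d < n) 1)).
  by apply: leq_sum => i _; case: (coprime n i).
by rewrite sum_nat_const_nat subn0 muln1.
Qed.

Lemma cop_of_dvd u v l k : coprime u v -> 0 < k -> l %| u ^ k + v ^ k ->
  coprime l u.
Proof.
move=> cuv k0 hl.
set g := gcdn l u.
have gu : g %| u by exact: dvdn_gcdr.
have gl : g %| l by exact: dvdn_gcdl.
have guk : g %| u ^ k by apply: dvdn_trans gu _; exact: dvdn_exp.
have gvk : g %| v ^ k.
  by rewrite -(dvdn_addr _ guk); exact: dvdn_trans gl hl.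
have cg : coprime g (v ^ k) by rewrite coprimeXr //; exact: coprime_dvdl gu cuv.
have : coprime g g by exact: coprime_dvdr gvk cg.
by rewrite /coprime gcdnn.
Qed.

Lemma invmodP l b : 1 < l -> coprime b l -> b * invmod l b = 1 %[mod l].
Proof.
move=> l1 cb.
rewrite /invmod.
set P := (fun c => b * c == 1 %[mod l]).
have hP : has P (iota 0 l).
  apply/hasP; exists (b ^ (totient l).-1 %% l).
    by rewrite mem_iota /= add0n ltn_mod; lia.
  rewrite /P modnMmr -expnS prednK ?totient_gt0; last lia.
  by apply/eqP; exact: Euler_exp_totient.
by move: (nth_find 0 hP) => /eqP.
Qed.

Lemma ordmodP l x : 1 < l -> coprime x l ->
  [/\ 0 < ordmod l x, x ^ ordmod l x = 1 %[mod l] &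
      forall m, 0 < m -> m < ordmod l x -> x ^ m != 1 %[mod l]].
Proof.
move=> l1 cx.
rewrite /ordmod.
set P := (fun m => x ^ m == 1 %[mod l]).
have hP : has P (iota 1 l).
  apply/hasP; exists (totient l).
    have := totient_le l; rewrite mem_iota totient_gt0; lia.
  by apply/eqP; exact: Euler_exp_totient.
have fl : find P (iota 1 l) < l by move: hP; rewrite has_find size_iota.
rewrite nth_iota //.
split.
- lia.
- by move: (nth_find 0 hP); rewrite nth_iota // => /eqP.
- move=> m m0 mlt.
  have jl : m.-1 < find P (iota 1 l) by lia.
  move: (before_find 0 jl); rewrite nth_iota; last lia.
  by rewrite /P add1n prednK // => ->.
Qed.

Lemma period l x d j r : x ^ d = 1 %[mod l] -> x ^ (j * d + r) = x ^ r %[mod l].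
Proof.
move=> hd.
rewrite expnD (mulnC j d) expnM -modnMml -(modnXm j) hd modnXm exp1n modnMml mul1n //.
Qed.

Lemma ord_dvd l x d m : 0 < d -> x ^ d = 1 %[mod l] ->
  (forall m, 0 < m -> m < d -> x ^ m != 1 %[mod l]) ->
  x ^ m = 1 %[mod l] -> d %| m.
Proof.
move=> d0 hd hmin hm.
have e : m = (m %/ d) * d + m %% d by rewrite -divn_eq.
have hr : x ^ (m %% d) = 1 %[mod l] by rewrite -(period _ _ _ (m %/ d) (m %% d) hd) -e.
case r0 : (m %% d) => [|r].
  by rewrite /dvdn r0.
have := hmin r.+1 isT; rewrite -r0 ltn_mod d0 hr eqxx => /(_ isT) //.
Qed.

Lemma dvd_modeq l m n : m = n %[mod l] -> (l %| m) = (l %| n).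
Proof. by move=> h; rewrite /dvdn h. Qed.

Lemma arith d k m : 0 < d -> k + k = m * d -> ~~ (d %| k) ->
  ~~ odd d /\ exists m, odd m /\ k = m * (d %/ 2).
Proof.
move=> d0 eq ndk.
have [om|em] := boolP (odd m); last first.
  exfalso; move/negP: ndk; apply; apply/dvdnP; exists (m %/ 2).
  have mm : m = (m %/ 2) * 2 by lia.
  move: eq; rewrite mm; move: (m %/ 2) => m'; nia.
have ed : ~~ odd d.
  by have := congr1 odd eq; rewrite oddM om addnn odd_double /= => <-.
split => //; exists m; split => //.
have dd : d = (d %/ 2) * 2 by lia.
move: eq; rewrite dd; move: (d %/ 2) => h'; nia.
Qed.

Lemma odd_split al h : odd al -> al * h = (al %/ 2) * (h * 2) + h.
Proof. move=> o; have e : al = (al %/ 2) * 2 + 1 by lia.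
rewrite {1}e; move: (al %/ 2) => q; nia. Qed.

Lemma odd_gt0 m : odd m -> 0 < m.
Proof. by case: m. Qed.

Lemma bigN N h : 0 < h -> N < (2 * N + 1) * h.
Proof. move=> h0; nia. Qed.

Lemma odd2N1 N : odd (2 * N + 1).
Proof. lia. Qed.

Theorem lemma2p11 (a b l : nat) :
  0 < a -> 0 < b -> coprime a b -> inG a b l -> l != 1 -> l != 2 ->
  [/\ ~~ odd (ord_ab l a b),
      inK a b l (ord_ab l a b %/ 2)
      /\ (forall k, inK a b l k -> ord_ab l a b %/ 2 <= k),
      (forall k, inK a b l k <->
         exists alpha, odd alpha /\ k = alpha * (ord_ab l a b %/ 2))
    & (forall N, exists k, N < k /\ inK a b l k)].
Proof.
move=> a0 b0 cab [l0 [k0 [k00 hk0]]] l1 l2.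
have l3 : 2 < l by lia.
have cla : coprime l a by exact: cop_of_dvd cab k00 hk0.
have clb : coprime l b.
  apply: (cop_of_dvd b a l k0) => //; first by rewrite coprime_sym.
  by rewrite addnC.
have hbc := invmodP l b (ltnW l3) (etrans (coprime_sym b l) clb).
rewrite /ord_ab /inK.
set c := invmod l b in hbc *.
set x := a * c.
have equiv : forall k, (l %| a ^ k + b ^ k) = (l %| x ^ k + 1).
  move=> k.
  have e1 : (a ^ k + b ^ k) * c ^ k = x ^ k + (b * c) ^ k.
    by rewrite mulnDl !expnMn.
  have e2 : (x ^ k + (b * c) ^ k) = x ^ k + 1 %[mod l].
    by rewrite -modnDmr -modnXm hbc modnXm exp1n modnDmr.
  have e3 : (a ^ k + b ^ k) * (b * c) ^ k = (x ^ k + (b * c) ^ k) * b ^ k.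
    rewrite /x !expnMn; move: (a ^ k) (b ^ k) (c ^ k) => A B C; nia.
  have e4 : (a ^ k + b ^ k) * (b * c) ^ k = a ^ k + b ^ k %[mod l].
    by rewrite -modnMmr -modnXm hbc modnXm exp1n modnMmr muln1.
  apply/idP/idP => h.
    by rewrite -(dvd_modeq _ _ _ e2) -e1 dvdn_mulr.
  have e5 : (x ^ k + (b * c) ^ k) * b ^ k = (x ^ k + 1) * b ^ k %[mod l].
    by rewrite -modnMml e2 modnMml.
  by rewrite -(dvd_modeq _ _ _ e4) e3 (dvd_modeq _ _ _ e5) dvdn_mulr.
have cx : coprime x l.
  rewrite coprime_sym; apply: (cop_of_dvd x 1 l k0); first exact: coprimen1.
    by [].
  by rewrite exp1n -equiv.
have [d0 hd hmin] := ordmodP l x (ltnW l3) cx.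
set d := ordmod l x in d0 hd hmin *.
have hdvd := ord_dvd l x d _ d0 hd hmin.
have key : forall k, 0 < k -> l %| x ^ k + 1 ->
    ~~ odd d /\ exists m, odd m /\ k = m * (d %/ 2).
  move=> k kp hk.
  have h2 : x ^ (k + k) = 1 %[mod l].
    apply/eqP; rewrite -(eqn_modDr (x ^ k)).
    have E : x ^ (k + k) + x ^ k = x ^ k * (x ^ k + 1) by rewrite expnD mulnDr muln1.
    have hA : l %| x ^ (k + k) + x ^ k by rewrite E dvdn_mull.
    have hB : l %| 1 + x ^ k by rewrite addnC.
    by move: hA hB; rewrite /dvdn => /eqP -> /eqP ->.
  have dk2 : d %| k + k by apply: hdvd.
  have ndk : ~~ (d %| k).
    apply/negP => /dvdnP [q eq].
    have E : x ^ k = 1 %[mod l] by rewrite eq -(addn0 (q * d)) period.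
    have E2 : x ^ k + 1 = 1 + 1 %[mod l] by rewrite -modnDml E modnDml.
    move: hk; rewrite (dvd_modeq _ _ _ E2) => /dvdn_leq H.
    lia.
  by case/dvdnP: dk2 => m eq; apply: (arith d k m).
have [ed [m0 [om0 ek0]]] := key k0 k00 (ltac:(by rewrite -equiv)).
set h := d %/ 2 in ek0 key *.
have dd : d = h * 2 by rewrite /h; lia.
have h0 : 0 < h by rewrite /h; lia.
have perh : forall al, odd al -> x ^ (al * h) = x ^ h %[mod l].
  move=> al oal.
  rewrite (odd_split al h oal) -dd.
  by rewrite period.
have hh : l %| x ^ h + 1.
  have E : x ^ k0 + 1 = x ^ h + 1 %[mod l] by rewrite -modnDml ek0 perh // modnDml.
  by rewrite -(dvd_modeq _ _ _ E) -equiv.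
split => //.
- by split; [split => //; rewrite equiv | move=> k [kp hk]; have [_ [m [om ->]]] := key k kp (ltac:(by rewrite -equiv)); apply: leq_pmull; exact: odd_gt0].
- move=> k; split.
    by move=> [kp hk]; have [_ H] := key k kp (ltac:(by rewrite -equiv)); exact: H.
  move=> [al [oal ->]]; split; first by rewrite muln_gt0 h0 andbT odd_gt0.
  have E : x ^ (al * h) + 1 = x ^ h + 1 %[mod l] by rewrite -modnDml perh // modnDml.
  by rewrite equiv (dvd_modeq _ _ _ E).
- move=> N; exists ((2 * N + 1) * h); split; first exact: bigN.
  split; first by rewrite muln_gt0 h0 andbT addn1.
  have E : x ^ ((2 * N + 1) * h) + 1 = x ^ h + 1 %[mod l].
    by rewrite -modnDml perh ?modnDml // odd2N1.
  by rewrite equiv (dvd_modeq _ _ _ E).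
Qed.
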